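(* Consider the cellular $1$-chain on the surface $D$ $$\tilde\delta^E_{\mathrm{edge}}:=\sum_{x\in E}\sum_{y:\,in(y)=x}y-\sum_{x\in\iota E}\sum_{y:\,in(y)=x}y .$$ Then $\tilde\delta^E_{\mathrm{edge}}$ is a boundary modulo $3$. More precisely, for any face $z_o$ of $D$, letting $D(z_o)$ be the complement in $D$ of the interiors of $z_o$ and $\iota z_o$, there are integers $n_z$ indexed by the faces $z\neq z_o,\iota z_o$ such that $\tilde\delta^E_{\mathrm{edge}}\equiv\sum_z n_z\,\partial z$ modulo $3$ times the group of cellular $1$-chains; i.e. $\tilde\delta^E_{\mathrm{edge}}$ is a boundary modulo $3$ as a chain on $D(z_o)$.
   Context: $D\subset\mathbb R^3$ is a regular dodecahedron centered at $0$ regarded as a cellular 2-sphere (vertices, oriented edges, faces with their outward-induced orientation), $\iota=-\mathrm{id}$. For an oriented edge $y$, $in(y)$ is its initial vertex. $\mathcal K$ is the set of five cubes inscribed in $D$; for a fixed $e\in\mathcal K$, its 8 vertices split into two 4-element sets of pairwise non-adjacent (in the cube) vertices, $E$ and $\iota E$. *)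

(* Defs.v *)
(* A concrete, exact model of the regular dodecahedron D
   centred at 0, as a cellular 2-sphere.

   Coordinates live in Z[phi] = {a + b*phi | a, b : int}, phi = (1+sqrt 5)/2
   the golden ratio (phi^2 = phi + 1); an element a + b*phi is encoded as
   the pair (a, b).  All of D's vertex coordinates (scaled by the harmless
   factor phi) lie in Z[phi], so everything below is exact. *)
From mathcomp Require Import all_boot all_order all_algebra.
Set Implicit Arguments.
Unset Strict Implicit.
Unset Printing Implicit Defensive.
Import Order.TTheory GRing.Theory Num.Theory.
Local Open Scope ring_scope.

Definition zphi := (int * int)%type.     (* (a, b) stands for a + b*phi *)
Definition zp (a b : int) : zphi := (a, b).
Definition zadd (x y : zphi) : zphi := (x.1 + y.1, x.2 + y.2).
Definition zopp (x : zphi) : zphi := (- x.1, - x.2).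
(* (a + b phi)(c + d phi) = (ac + bd) + (ad + bc + bd) phi, using phi^2 = phi + 1 *)
Definition zmul (x y : zphi) : zphi :=
  (x.1 * y.1 + x.2 * y.2, x.1 * y.2 + x.2 * y.1 + x.2 * y.2).
(* zpos x <=> the real number a + b*phi is > 0.
   With s := 2a + b we have 2(a + b phi) = s + b sqrt 5. *)
Definition zpos (x : zphi) : bool :=
  let s := 2 * x.1 + x.2 in
  let q := x.2 in
  if (0 <= s) && (0 <= q) then (s != 0) || (q != 0)
  else if (s <= 0) && (q <= 0) then false
  else if 0 < s then 5 * q ^+ 2 < s ^+ 2     (* s > 0, q < 0 *)
  else s ^+ 2 < 5 * q ^+ 2.                  (* s < 0, q > 0 *)

Definition vec := (zphi * zphi * zphi)%type.
Definition vx (v : vec) : zphi := v.1.1.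
Definition vy (v : vec) : zphi := v.1.2.
Definition vz (v : vec) : zphi := v.2.
Definition mkv (x y z : zphi) : vec := (x, y, z).
Definition vadd (u v : vec) : vec := mkv (zadd (vx u) (vx v)) (zadd (vy u) (vy v)) (zadd (vz u) (vz v)).
Definition vopp (u : vec) : vec := mkv (zopp (vx u)) (zopp (vy u)) (zopp (vz u)).
Definition vsub (u v : vec) : vec := vadd u (vopp v).
Definition vdbl (u : vec) : vec := vadd u u.
Definition vdot (u v : vec) : zphi :=
  zadd (zadd (zmul (vx u) (vx v)) (zmul (vy u) (vy v))) (zmul (vz u) (vz v)).
Definition vcross (u v : vec) : vec :=
  mkv (zadd (zmul (vy u) (vz v)) (zopp (zmul (vz u) (vy v))))
      (zadd (zmul (vz u) (vx v)) (zopp (zmul (vx u) (vz v))))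
      (zadd (zmul (vx u) (vy v)) (zopp (zmul (vy u) (vx v)))).
Definition vdet (a b n : vec) : zphi := vdot n (vcross a b).

Definition z0 : zphi := zp 0 0.
Definition z1 : zphi := zp 1 0.
Definition zf : zphi := zp 0 1.
Definition zf2 : zphi := zp 1 1.
Definition vzero : vec := mkv z0 z0 z0.

(* ---------- vertices (20) ----------
   The regular dodecahedron with vertices (±1,±1,±1), (0,±1/phi,±phi),
   (±1/phi,±phi,0), (±phi,0,±1/phi), scaled by phi. *)
Definition vlist : seq vec :=
  [:: mkv zf zf zf; mkv zf zf (zopp zf); mkv zf (zopp zf) zf; mkv zf (zopp zf) (zopp zf);
      mkv (zopp zf) zf zf; mkv (zopp zf) zf (zopp zf); mkv (zopp zf) (zopp zf) zf;
      mkv (zopp zf) (zopp zf) (zopp zf);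
      mkv z0 z1 zf2; mkv z0 z1 (zopp zf2); mkv z0 (zopp z1) zf2; mkv z0 (zopp z1) (zopp zf2);
      mkv z1 zf2 z0; mkv z1 (zopp zf2) z0; mkv (zopp z1) zf2 z0; mkv (zopp z1) (zopp zf2) z0;
      mkv zf2 z0 z1; mkv zf2 z0 (zopp z1); mkv (zopp zf2) z0 z1; mkv (zopp zf2) z0 (zopp z1)].

Definition vert := 'I_20.
Definition vc (v : vert) : vec := nth vzero vlist v.

(* edges: two vertices are joined by an edge of D iff their distance is the
   edge length (= 2 after scaling, i.e. squared distance 4). *)
Definition adj (a b : vert) : bool :=
  vdot (vsub (vc a) (vc b)) (vsub (vc a) (vc b)) == zp 4 0.

(* ---------- faces (12) ----------
   Face z is given by its outward normal nrm z (the 12 vectors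
   (0,±phi,±1), (±phi,±1,0), (±1,0,±phi)); its vertices are the vertices of D
   on the supporting plane  x . nrm z = 1 + 2 phi  (the maximum of x . nrm z). *)
Definition flist : seq vec :=
  [:: mkv z0 zf z1; mkv z0 zf (zopp z1); mkv z0 (zopp zf) z1; mkv z0 (zopp zf) (zopp z1);
      mkv zf z1 z0; mkv zf (zopp z1) z0; mkv (zopp zf) z1 z0; mkv (zopp zf) (zopp z1) z0;
      mkv z1 z0 zf; mkv z1 z0 (zopp zf); mkv (zopp z1) z0 zf; mkv (zopp z1) z0 (zopp zf)].

Definition face := 'I_12.
Definition nrm (z : face) : vec := nth vzero flist z.
Definition on_face (z : face) (v : vert) : bool := vdot (vc v) (nrm z) == zp 1 2.

Definition iotaV (v : vert) : vert := odflt v [pick w | vc w == vopp (vc v)].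
Definition iotaF (z : face) : face := odflt z [pick w | nrm w == vopp (nrm z)].
Definition iotaS (E : {set vert}) : {set vert} := iotaV @: E.

(* ---------- cellular 1-chains ----------
   A 1-chain with integer coefficients is represented by its coefficient
   function on oriented edges  c : vert -> vert -> int  (only values on
   pairs (a,b) with adj a b matter), with the convention that the reversed
   edge carries the opposite coefficient:  the chain "oriented edge y = (a,b)"
   has coefficient 1 at (a,b) and -1 at (b,a). *)

(* boundary of the face z with its outward-induced orientation: the boundary
   edge (a,b) is positively oriented iff it turns counterclockwise around the
   outward normal, i.e. nrm z . (a x b) > 0. *)
Definition bdry (z : face) (a b : vert) : int :=
  if [&& adj a b, on_face z a & on_face z b] then
    (if zpos (vdet (vc a) (vc b) (nrm z)) then 1 else -1)
  else 0.

(* the chain  sum_{x in E} sum_{in(y)=x} y - sum_{x in iota E} sum_{in(y)=x} y :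
   its coefficient at the oriented edge (a,b). *)
Definition delta_edge (E : {set vert}) (a b : vert) : int :=
  if adj a b then
    ((a \in E)%:R - (b \in E)%:R - (a \in iotaS E)%:R + (b \in iotaS E)%:R)
  else 0.

(* ---------- inscribed cubes ----------
   A cube inscribed in D (its 8 vertices are vertices of D) is given by a
   labelling g : {0,1}^3 -> vertices of D, a (doubled) centre c2 and three
   (doubled) half-edge vectors w1 w2 w3, pairwise orthogonal and of the same
   nonzero length, with  2 * vc (g (e1,e2,e3)) = c2 ± w1 ± w2 ± w3. *)
Definition sgnv (b : bool) (w : vec) : vec := if b then w else vopp w.

Definition cube_param (g : bool * bool * bool -> vert) (c2 w1 w2 w3 : vec) : Prop :=
  [/\ forall t : bool * bool * bool,
        vdbl (vc (g t)) = vadd (vadd (vadd c2 (sgnv t.1.1 w1)) (sgnv t.1.2 w2)) (sgnv t.2 w3),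
      vdot w1 w2 = z0, vdot w1 w3 = z0, vdot w2 w3 = z0 &
      [/\ vdot w1 w1 = vdot w2 w2, vdot w1 w1 = vdot w3 w3 & vdot w1 w1 <> z0]].

Definition inscribed_cube (e : {set vert}) : Prop :=
  exists g c2 w1 w2 w3, cube_param g c2 w1 w2 w3 /\ e = [set g t | t in [set: bool * bool * bool]].

Definition hamming (s t : bool * bool * bool) : nat :=
  ((s.1.1 != t.1.1) + (s.1.2 != t.1.2) + (s.2 != t.2))%N.

Definition cube_adj (e : {set vert}) (x y : vert) : Prop :=
  exists g c2 w1 w2 w3, [/\ cube_param g c2 w1 w2 w3,
    e = [set g t | t in [set: bool * bool * bool]] &
    exists s t, [/\ x = g s, y = g t & hamming s t = 1%N]].

Lemma vlist_size : size vlist = 20%N. Proof. by []. Qed.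
Lemma vlist_uniq : uniq vlist. Proof. by vm_compute. Qed.
Lemma flist_uniq : size flist = 12%N /\ uniq flist. Proof. by vm_compute. Qed.

(* Main.v *)
Require Import Defs.
From mathcomp Require Import all_boot all_order all_algebra.
From mathcomp Require Import ring zify.
Import Order.TTheory GRing.Theory Num.Theory.
Local Open Scope ring_scope.
Definition tets : seq (seq nat) := [:: [:: 0; 3; 5; 6]; [:: 0; 9; 13; 18]; [:: 1; 2; 4; 7]; [:: 1; 8; 13; 19]; [:: 2; 11; 12; 18]; [:: 3; 10; 12; 19]; [:: 4; 9; 15; 16]; [:: 5; 8; 15; 17]; [:: 6; 11; 14; 16]; [:: 7; 10; 14; 17]].
Definition soltab : seq (seq (seq nat)) := [:: [:: [:: 0%N; 0%N; 0%N; 0%N; 2%N; 2%N; 2%N; 2%N; 1%N; 1%N; 1%N; 1%N]; [:: 0%N; 0%N; 0%N; 0%N; 2%N; 2%N; 2%N; 2%N; 1%N; 1%N; 1%N; 1%N]; [:: 0%N; 0%N; 0%N; 0%N; 2%N; 2%N; 2%N; 2%N; 1%N; 1%N; 1%N; 1%N]; [:: 0%N; 0%N; 0%N; 0%N; 2%N; 2%N; 2%N; 2%N; 1%N; 1%N; 1%N; 1%N]; [:: 1%N; 1%N; 1%N; 1%N; 0%N; 0%N; 0%N; 0%N; 2%N; 2%N; 2%N; 2%N]; [:: 1%N; 1%N; 1%N; 1%N; 0%N; 0%N; 0%N; 0%N; 2%N; 2%N; 2%N; 2%N]; [:: 1%N; 1%N; 1%N; 1%N; 0%N; 0%N; 0%N;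 0%N; 2%N; 2%N; 2%N; 2%N]; [:: 1%N; 1%N; 1%N; 1%N; 0%N; 0%N; 0%N; 0%N; 2%N; 2%N; 2%N; 2%N]; [:: 2%N; 2%N; 2%N; 2%N; 1%N; 1%N; 1%N; 1%N; 0%N; 0%N; 0%N; 0%N]; [:: 2%N; 2%N; 2%N; 2%N; 1%N; 1%N; 1%N; 1%N; 0%N; 0%N; 0%N; 0%N]; [:: 2%N; 2%N; 2%N; 2%N; 1%N; 1%N; 1%N; 1%N; 0%N; 0%N; 0%N; 0%N]; [:: 2%N; 2%N; 2%N; 2%N; 1%N; 1%N; 1%N; 1%N; 0%N; 0%N; 0%N; 0%N]];
 [:: [:: 0%N; 2%N; 2%N; 0%N; 2%N; 1%N; 1%N; 2%N; 1%N; 0%N; 0%N; 1%N]; [:: 1%N; 0%N; 0%N; 1%N; 0%N; 2%N; 2%N; 0%N; 2%N; 1%N; 1%N; 2%N]; [:: 1%N; 0%N; 0%N; 1%N; 0%N; 2%N; 2%N; 0%N; 2%N; 1%N; 1%N; 2%N]; [:: 0%N; 2%N; 2%N; 0%N; 2%N; 1%N; 1%N; 2%N; 1%N; 0%N; 0%N; 1%N]; [:: 1%N; 0%N; 0%N; 1%N; 0%N; 2%N; 2%N; 0%N; 2%N; 1%N; 1%N; 2%N]; [:: 2%N; 1%N; 1%N; 2%N; 1%N; 0%N; 0%N; 1%N; 0%N; 2%N; 2%N; 0%N]; [:: 2%N; 1%N; 1%N; 2%N; 1%N; 0%N; 0%N; 1%N; 0%N; 2%N; 2%N; 0%N]; [::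 1%N; 0%N; 0%N; 1%N; 0%N; 2%N; 2%N; 0%N; 2%N; 1%N; 1%N; 2%N]; [:: 2%N; 1%N; 1%N; 2%N; 1%N; 0%N; 0%N; 1%N; 0%N; 2%N; 2%N; 0%N]; [:: 0%N; 2%N; 2%N; 0%N; 2%N; 1%N; 1%N; 2%N; 1%N; 0%N; 0%N; 1%N]; [:: 0%N; 2%N; 2%N; 0%N; 2%N; 1%N; 1%N; 2%N; 1%N; 0%N; 0%N; 1%N]; [:: 2%N; 1%N; 1%N; 2%N; 1%N; 0%N; 0%N; 1%N; 0%N; 2%N; 2%N; 0%N]];
 [:: [:: 0%N; 0%N; 0%N; 0%N; 1%N; 1%N; 1%N; 1%N; 2%N; 2%N; 2%N; 2%N]; [:: 0%N; 0%N; 0%N; 0%N; 1%N; 1%N; 1%N; 1%N; 2%N; 2%N; 2%N; 2%N]; [:: 0%N; 0%N; 0%N; 0%N; 1%N; 1%N; 1%N; 1%N; 2%N; 2%N; 2%N; 2%N]; [:: 0%N; 0%N; 0%N; 0%N; 1%N; 1%N; 1%N; 1%N; 2%N; 2%N; 2%N; 2%N]; [:: 2%N; 2%N; 2%N; 2%N; 0%N; 0%N; 0%N; 0%N; 1%N; 1%N; 1%N; 1%N]; [:: 2%N; 2%N; 2%N; 2%N; 0%N; 0%N; 0%N; 0%N; 1%N; 1%N; 1%N; 1%N]; [:: 2%N; 2%N; 2%N; 2%N; 0%N; 0%N; 0%N; 0%N; 1%N; 1%N; 1%N; 1%N]; [:: 2%N; 2%N; 2%N; 2%N; 0%N; 0%N;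 0%N; 0%N; 1%N; 1%N; 1%N; 1%N]; [:: 1%N; 1%N; 1%N; 1%N; 2%N; 2%N; 2%N; 2%N; 0%N; 0%N; 0%N; 0%N]; [:: 1%N; 1%N; 1%N; 1%N; 2%N; 2%N; 2%N; 2%N; 0%N; 0%N; 0%N; 0%N]; [:: 1%N; 1%N; 1%N; 1%N; 2%N; 2%N; 2%N; 2%N; 0%N; 0%N; 0%N; 0%N]; [:: 1%N; 1%N; 1%N; 1%N; 2%N; 2%N; 2%N; 2%N; 0%N; 0%N; 0%N; 0%N]];
 [:: [:: 0%N; 2%N; 2%N; 0%N; 0%N; 1%N; 1%N; 0%N; 2%N; 1%N; 1%N; 2%N]; [:: 1%N; 0%N; 0%N; 1%N; 1%N; 2%N; 2%N; 1%N; 0%N; 2%N; 2%N; 0%N]; [:: 1%N; 0%N; 0%N; 1%N; 1%N; 2%N; 2%N; 1%N; 0%N; 2%N; 2%N; 0%N]; [:: 0%N; 2%N; 2%N; 0%N; 0%N; 1%N; 1%N; 0%N; 2%N; 1%N; 1%N; 2%N]; [:: 0%N; 2%N; 2%N; 0%N; 0%N; 1%N; 1%N; 0%N; 2%N; 1%N; 1%N; 2%N]; [:: 2%N; 1%N; 1%N; 2%N; 2%N; 0%N; 0%N; 2%N; 1%N; 0%N; 0%N; 1%N]; [:: 2%N; 1%N; 1%N; 2%N; 2%N; 0%N; 0%N; 2%N; 1%N; 0%N; 0%N; 1%N]; [:: 0%N; 2%N; 2%N; 0%N; 0%N; 1%N; 1%N; 0%N; 2%N; 1%N; 1%N; 2%N];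 [:: 1%N; 0%N; 0%N; 1%N; 1%N; 2%N; 2%N; 1%N; 0%N; 2%N; 2%N; 0%N]; [:: 2%N; 1%N; 1%N; 2%N; 2%N; 0%N; 0%N; 2%N; 1%N; 0%N; 0%N; 1%N]; [:: 2%N; 1%N; 1%N; 2%N; 2%N; 0%N; 0%N; 2%N; 1%N; 0%N; 0%N; 1%N]; [:: 1%N; 0%N; 0%N; 1%N; 1%N; 2%N; 2%N; 1%N; 0%N; 2%N; 2%N; 0%N]];
 [:: [:: 0%N; 2%N; 2%N; 0%N; 1%N; 0%N; 0%N; 1%N; 1%N; 2%N; 2%N; 1%N]; [:: 1%N; 0%N; 0%N; 1%N; 2%N; 1%N; 1%N; 2%N; 2%N; 0%N; 0%N; 2%N]; [:: 1%N; 0%N; 0%N; 1%N; 2%N; 1%N; 1%N; 2%N; 2%N; 0%N; 0%N; 2%N]; [:: 0%N; 2%N; 2%N; 0%N; 1%N; 0%N; 0%N; 1%N; 1%N; 2%N; 2%N; 1%N]; [:: 2%N; 1%N; 1%N; 2%N; 0%N; 2%N; 2%N; 0%N; 0%N; 1%N; 1%N; 0%N]; [:: 0%N; 2%N; 2%N; 0%N; 1%N; 0%N; 0%N; 1%N; 1%N; 2%N; 2%N; 1%N]; [:: 0%N; 2%N; 2%N; 0%N; 1%N; 0%N; 0%N; 1%N; 1%N; 2%N; 2%N; 1%N]; [:: 2%N; 1%N; 1%N; 2%N; 0%N; 2%N; 2%N; 0%N; 0%N; 1%N; 1%N; 0%N]; [:: 2%N; 1%N; 1%N; 2%N; 0%N;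 2%N; 2%N; 0%N; 0%N; 1%N; 1%N; 0%N]; [:: 1%N; 0%N; 0%N; 1%N; 2%N; 1%N; 1%N; 2%N; 2%N; 0%N; 0%N; 2%N]; [:: 1%N; 0%N; 0%N; 1%N; 2%N; 1%N; 1%N; 2%N; 2%N; 0%N; 0%N; 2%N]; [:: 2%N; 1%N; 1%N; 2%N; 0%N; 2%N; 2%N; 0%N; 0%N; 1%N; 1%N; 0%N]];
 [:: [:: 0%N; 2%N; 2%N; 0%N; 1%N; 2%N; 2%N; 1%N; 0%N; 1%N; 1%N; 0%N]; [:: 1%N; 0%N; 0%N; 1%N; 2%N; 0%N; 0%N; 2%N; 1%N; 2%N; 2%N; 1%N]; [:: 1%N; 0%N; 0%N; 1%N; 2%N; 0%N; 0%N; 2%N; 1%N; 2%N; 2%N; 1%N]; [:: 0%N; 2%N; 2%N; 0%N; 1%N; 2%N; 2%N; 1%N; 0%N; 1%N; 1%N; 0%N]; [:: 2%N; 1%N; 1%N; 2%N; 0%N; 1%N; 1%N; 0%N; 2%N; 0%N; 0%N; 2%N]; [:: 1%N; 0%N; 0%N; 1%N; 2%N; 0%N; 0%N; 2%N; 1%N; 2%N; 2%N; 1%N]; [:: 1%N; 0%N; 0%N; 1%N; 2%N; 0%N; 0%N; 2%N; 1%N; 2%N; 2%N; 1%N]; [:: 2%N; 1%N; 1%N; 2%N; 0%N; 1%N; 1%N; 0%N; 2%N; 0%N; 0%N; 2%N]; [:: 0%N; 2%N; 2%N; 0%N; 1%N; 2%N; 2%N; 1%N; 0%N; 1%N; 1%N;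 0%N]; [:: 2%N; 1%N; 1%N; 2%N; 0%N; 1%N; 1%N; 0%N; 2%N; 0%N; 0%N; 2%N]; [:: 2%N; 1%N; 1%N; 2%N; 0%N; 1%N; 1%N; 0%N; 2%N; 0%N; 0%N; 2%N]; [:: 0%N; 2%N; 2%N; 0%N; 1%N; 2%N; 2%N; 1%N; 0%N; 1%N; 1%N; 0%N]];
 [:: [:: 0%N; 1%N; 1%N; 0%N; 2%N; 1%N; 1%N; 2%N; 0%N; 2%N; 2%N; 0%N]; [:: 2%N; 0%N; 0%N; 2%N; 1%N; 0%N; 0%N; 1%N; 2%N; 1%N; 1%N; 2%N]; [:: 2%N; 0%N; 0%N; 2%N; 1%N; 0%N; 0%N; 1%N; 2%N; 1%N; 1%N; 2%N]; [:: 0%N; 1%N; 1%N; 0%N; 2%N; 1%N; 1%N; 2%N; 0%N; 2%N; 2%N; 0%N]; [:: 1%N; 2%N; 2%N; 1%N; 0%N; 2%N; 2%N; 0%N; 1%N; 0%N; 0%N; 1%N]; [:: 2%N; 0%N; 0%N; 2%N; 1%N; 0%N; 0%N; 1%N; 2%N; 1%N; 1%N; 2%N]; [:: 2%N; 0%N; 0%N; 2%N; 1%N; 0%N; 0%N; 1%N; 2%N; 1%N; 1%N; 2%N]; [:: 1%N; 2%N; 2%N; 1%N; 0%N; 2%N; 2%N; 0%N; 1%N; 0%N; 0%N; 1%N]; [:: 0%N; 1%N; 1%N; 0%N; 2%N; 1%N; 1%N; 2%N; 0%N; 2%N; 2%N; 0%N]; [:: 1%N; 2%N; 2%N; 1%N;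 0%N; 2%N; 2%N; 0%N; 1%N; 0%N; 0%N; 1%N]; [:: 1%N; 2%N; 2%N; 1%N; 0%N; 2%N; 2%N; 0%N; 1%N; 0%N; 0%N; 1%N]; [:: 0%N; 1%N; 1%N; 0%N; 2%N; 1%N; 1%N; 2%N; 0%N; 2%N; 2%N; 0%N]];
 [:: [:: 0%N; 1%N; 1%N; 0%N; 2%N; 0%N; 0%N; 2%N; 2%N; 1%N; 1%N; 2%N]; [:: 2%N; 0%N; 0%N; 2%N; 1%N; 2%N; 2%N; 1%N; 1%N; 0%N; 0%N; 1%N]; [:: 2%N; 0%N; 0%N; 2%N; 1%N; 2%N; 2%N; 1%N; 1%N; 0%N; 0%N; 1%N]; [:: 0%N; 1%N; 1%N; 0%N; 2%N; 0%N; 0%N; 2%N; 2%N; 1%N; 1%N; 2%N]; [:: 1%N; 2%N; 2%N; 1%N; 0%N; 1%N; 1%N; 0%N; 0%N; 2%N; 2%N; 0%N]; [:: 0%N; 1%N; 1%N; 0%N; 2%N; 0%N; 0%N; 2%N; 2%N; 1%N; 1%N; 2%N]; [:: 0%N; 1%N; 1%N; 0%N; 2%N; 0%N; 0%N; 2%N; 2%N; 1%N; 1%N; 2%N]; [:: 1%N; 2%N; 2%N; 1%N; 0%N; 1%N; 1%N; 0%N; 0%N; 2%N; 2%N; 0%N]; [:: 1%N; 2%N; 2%N; 1%N; 0%N; 1%N; 1%N; 0%N; 0%N; 2%N; 2%N; 0%N]; [:: 2%N; 0%N; 0%N; 2%N; 1%N; 2%N; 2%N; 1%N; 1%N; 0%N;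 0%N; 1%N]; [:: 2%N; 0%N; 0%N; 2%N; 1%N; 2%N; 2%N; 1%N; 1%N; 0%N; 0%N; 1%N]; [:: 1%N; 2%N; 2%N; 1%N; 0%N; 1%N; 1%N; 0%N; 0%N; 2%N; 2%N; 0%N]];
 [:: [:: 0%N; 1%N; 1%N; 0%N; 0%N; 2%N; 2%N; 0%N; 1%N; 2%N; 2%N; 1%N]; [:: 2%N; 0%N; 0%N; 2%N; 2%N; 1%N; 1%N; 2%N; 0%N; 1%N; 1%N; 0%N]; [:: 2%N; 0%N; 0%N; 2%N; 2%N; 1%N; 1%N; 2%N; 0%N; 1%N; 1%N; 0%N]; [:: 0%N; 1%N; 1%N; 0%N; 0%N; 2%N; 2%N; 0%N; 1%N; 2%N; 2%N; 1%N]; [:: 0%N; 1%N; 1%N; 0%N; 0%N; 2%N; 2%N; 0%N; 1%N; 2%N; 2%N; 1%N]; [:: 1%N; 2%N; 2%N; 1%N; 1%N; 0%N; 0%N; 1%N; 2%N; 0%N; 0%N; 2%N]; [:: 1%N; 2%N; 2%N; 1%N; 1%N; 0%N; 0%N; 1%N; 2%N; 0%N; 0%N; 2%N]; [:: 0%N; 1%N; 1%N; 0%N; 0%N; 2%N; 2%N; 0%N; 1%N; 2%N; 2%N; 1%N]; [:: 2%N; 0%N; 0%N; 2%N; 2%N; 1%N; 1%N; 2%N; 0%N; 1%N; 1%N; 0%N]; [:: 1%N; 2%N; 2%N; 1%N; 1%N; 0%N; 0%N; 1%N; 2%N; 0%N; 0%N; 2%N]; [:: 1%N; 2%N; 2%N;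 1%N; 1%N; 0%N; 0%N; 1%N; 2%N; 0%N; 0%N; 2%N]; [:: 2%N; 0%N; 0%N; 2%N; 2%N; 1%N; 1%N; 2%N; 0%N; 1%N; 1%N; 0%N]];
 [:: [:: 0%N; 1%N; 1%N; 0%N; 1%N; 2%N; 2%N; 1%N; 2%N; 0%N; 0%N; 2%N]; [:: 2%N; 0%N; 0%N; 2%N; 0%N; 1%N; 1%N; 0%N; 1%N; 2%N; 2%N; 1%N]; [:: 2%N; 0%N; 0%N; 2%N; 0%N; 1%N; 1%N; 0%N; 1%N; 2%N; 2%N; 1%N]; [:: 0%N; 1%N; 1%N; 0%N; 1%N; 2%N; 2%N; 1%N; 2%N; 0%N; 0%N; 2%N]; [:: 2%N; 0%N; 0%N; 2%N; 0%N; 1%N; 1%N; 0%N; 1%N; 2%N; 2%N; 1%N]; [:: 1%N; 2%N; 2%N; 1%N; 2%N; 0%N; 0%N; 2%N; 0%N; 1%N; 1%N; 0%N]; [:: 1%N; 2%N; 2%N; 1%N; 2%N; 0%N; 0%N; 2%N; 0%N; 1%N; 1%N; 0%N]; [:: 2%N; 0%N; 0%N; 2%N; 0%N; 1%N; 1%N; 0%N; 1%N; 2%N; 2%N; 1%N]; [:: 1%N; 2%N; 2%N; 1%N; 2%N; 0%N; 0%N; 2%N; 0%N; 1%N; 1%N; 0%N]; [:: 0%N; 1%N; 1%N; 0%N; 1%N; 2%N; 2%N; 1%N; 2%N; 0%N; 0%N; 2%N]; [:: 0%N; 1%N; 1%N; 0%N; 1%N; 2%N; 2%N; 1%N; 2%N;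 0%N; 0%N; 2%N]; [:: 1%N; 2%N; 2%N; 1%N; 2%N; 0%N; 0%N; 2%N; 0%N; 1%N; 1%N; 0%N]]].
Definition ivtab : seq nat := [:: 7; 6; 5; 4; 3; 2; 1; 0; 11; 10; 9; 8; 15; 14; 13; 12; 19; 18; 17; 16]%N.
Definition iftab : seq nat := [:: 3; 2; 1; 0; 7; 6; 5; 4; 11; 10; 9; 8]%N.
Definition vcn (n : nat) : vec := nth vzero vlist n.
Definition nrmn (n : nat) : vec := nth vzero flist n.
Definition adjn (a b : nat) : bool :=
  vdot (vsub (vcn a) (vcn b)) (vsub (vcn a) (vcn b)) == zp 4 0.
Definition on_facen (z v : nat) : bool := vdot (vcn v) (nrmn z) == zp 1 2.
Definition bdryn (z a b : nat) : int :=
  if [&& adjn a b, on_facen z a & on_facen z b] then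
    (if zpos (vdet (vcn a) (vcn b) (nrmn z)) then 1 else -1)
  else 0.
Definition deltan (t : seq nat) (a b : nat) : int :=
  if adjn a b then
   ((a \in t)%:R - (b \in t)%:R - (nth 0%N ivtab a \in t)%:R + (nth 0%N ivtab b \in t)%:R)
  else 0.
Definition nsoln (i zo z : nat) : int := (nth 0%N (nth [::] (nth [::] soltab i) zo) z)%:Z.
Definition okn (i zo : nat) : bool :=
  all (fun a => all (fun b => adjn a b ==>
    (deltan (nth [::] tets i) a b == \sum_(0 <= z < 12 | (z != zo) && (z != nth 0%N iftab zo)) nsoln i zo z * bdryn z a b %[mod 3])%Z) (iota 0 20)) (iota 0 20).
Definition sqdn (a b : nat) : zphi := vdot (vsub (vcn a) (vcn b)) (vsub (vcn a) (vcn b)).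
Definition tetn : bool :=
  all (fun a => all (fun b => (a != b) ==> all (fun c =>
     [&& c != a, c != b, sqdn a c == sqdn a b & sqdn b c == sqdn a b] ==>
     all (fun d => [&& d != a, d != b, d != c, sqdn a d == sqdn a b, sqdn b d == sqdn a b & sqdn c d == sqdn a b] ==>
        has (fun i => perm_eq (nth [::] tets i) [:: a; b; c; d]) (iota 0 10)) (iota 0 20)) (iota 0 20)) (iota 0 20)) (iota 0 20).
Lemma tetn_ok : tetn. Proof. vm_compute. reflexivity. Qed.
Lemma ivok : all (fun n => (nth 0%N ivtab n < 20)%N && (vcn (nth 0%N ivtab n) == vopp (vcn n)) && (nth 0%N ivtab (nth 0%N ivtab n) == n)) (iota 0 20).
Proof. by vm_compute. Qed.
Lemma ifok : all (fun n => (nth 0%N iftab n < 12)%N && (nrmn (nth 0%N iftab n) == vopp (nrmn n))) (iota 0 12).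
Proof. by vm_compute. Qed.
Lemma allok : all (fun i => all (fun zo => okn i zo) (iota 0 12)) (iota 0 10).
Proof. rewrite /okn unlock. vm_compute. reflexivity. Qed.
Definition zsc (k : int) (x : zphi) : zphi := (k * x.1, k * x.2).
Definition vsc (k : int) (v : vec) : vec := mkv (zsc k (vx v)) (zsc k (vy v)) (zsc k (vz v)).

Ltac dvec v := let a1 := fresh "a" in let a2 := fresh "a" in let b1 := fresh "b" in
  let b2 := fresh "b" in let c1 := fresh "c" in let c2 := fresh "c" in
  case: v => [[[a1 a2] [b1 b2]] [c1 c2]].

Lemma sgnvE b w : sgnv b w = vsc (if b then 1 else -1) w.
Proof.
dvec w; case: b; rewrite /sgnv /vsc /zsc /vopp /zopp /mkv /vx /vy /vz /=;
  by rewrite ?mul1r ?mulN1r.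
Qed.

Lemma L1 (X Y : vec) : zsc 4 (vdot (vsub X Y) (vsub X Y)) =
   vdot (vsub (vdbl X) (vdbl Y)) (vsub (vdbl X) (vdbl Y)).
Proof.
dvec X; dvec Y; rewrite /zsc /vdot /vsub /vdbl /vadd /vopp /zadd /zopp /zmul /mkv /vx /vy /vz /=.
Time (congr pair; ring).
Qed.


Ltac crush := rewrite /zsc /vsc /vdot /vsub /vadd /vopp /zadd /zopp /zmul /mkv /vx /vy /vz /=; congr pair; ring.
Lemma diffE (c w1 w2 w3 : vec) (k1 k2 k3 l1 l2 l3 : int) :
  vsub (vadd (vadd (vadd c (vsc k1 w1)) (vsc k2 w2)) (vsc k3 w3))
       (vadd (vadd (vadd c (vsc l1 w1)) (vsc l2 w2)) (vsc l3 w3)) =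
  vadd (vadd (vsc (k1-l1) w1) (vsc (k2-l2) w2)) (vsc (k3-l3) w3).
Proof.
dvec c; dvec w1; dvec w2; dvec w3.
rewrite /zsc /vsc /vdot /vsub /vadd /vopp /zadd /zopp /zmul /mkv /vx /vy /vz /=.
(congr pair; [congr pair; congr pair|congr pair]; ring).
Qed.
Lemma dotDl u v x : vdot (vadd u v) x = zadd (vdot u x) (vdot v x).
Proof. dvec u; dvec v; dvec x; crush. Qed.
Lemma dotDr u v x : vdot x (vadd u v) = zadd (vdot x u) (vdot x v).
Proof. dvec u; dvec v; dvec x; crush. Qed.
Lemma dotZl k u v : vdot (vsc k u) v = zsc k (vdot u v).
Proof. dvec u; dvec v; crush. Qed.
Lemma dotZr k u v : vdot u (vsc k v) = zsc k (vdot u v).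
Proof. dvec u; dvec v; crush. Qed.
Lemma dotC u v : vdot u v = vdot v u.
Proof. dvec u; dvec v; crush. Qed.

Lemma key g c2 w1 w2 w3 s t : cube_param g c2 w1 w2 w3 -> hamming s t = 2%N ->
  zsc 4 (vdot (vsub (vc (g s)) (vc (g t))) (vsub (vc (g s)) (vc (g t)))) = zsc 8 (vdot w1 w1).
Proof.
case=> Hg H12 H13 H23 [N2 N3 _] Hh.
rewrite L1 !Hg !sgnvE diffE !dotDl !dotDr !dotZl !dotZr (dotC w2 w1) (dotC w3 w1) (dotC w3 w2).
rewrite H12 H13 H23 -N2 -N3.
move: Hh; case: (vdot w1 w1) => n1 n2.
case: s t => [[s1 s2] s3] [[t1 t2] t3].
case: s1; case: s2; case: s3; case: t1; case: t2; case: t3;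
  rewrite /hamming /zsc /zadd /z0 /zp /= => // _; congr pair; ring.
Qed.

Lemma nth_vlist_inj (i j : nat) : (i < 20)%N -> (j < 20)%N -> vcn i = vcn j -> i = j.
Proof.
move=> Hi Hj H; apply/eqP; rewrite -(nth_uniq vzero _ _ vlist_uniq) ?vlist_size //.
by apply/eqP.
Qed.

Lemma nth_flist_inj (i j : nat) : (i < 12)%N -> (j < 12)%N -> nrmn i = nrmn j -> i = j.
Proof.
case: flist_uniq => Hs Hu.
move=> Hi Hj H; apply/eqP; rewrite -(nth_uniq vzero _ _ Hu) ?Hs //.
by apply/eqP.
Qed.

Lemma iotaV_val (v : vert) : val (iotaV v) = nth 0%N ivtab v.
Proof.
move: ivok => /allP /(_ (val v)); rewrite mem_iota /= ltn_ord => /(_ isT) /andP [/andP [Hlt /eqP Heq] _].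
rewrite /iotaV; case: pickP => [w /eqP Hw | H] /=.
  apply: nth_vlist_inj => //; rewrite Heq; exact Hw.
by have := H (Ordinal Hlt); rewrite /vc /= -/(vcn _) Heq eqxx.
Qed.

Lemma iotaF_val (z : face) : val (iotaF z) = nth 0%N iftab z.
Proof.
move: ifok => /allP /(_ (val z)); rewrite mem_iota /= ltn_ord => /(_ isT) /andP [Hlt /eqP Heq].
rewrite /iotaF; case: pickP => [w /eqP Hw | H] /=.
  apply: nth_flist_inj => //; rewrite Heq; exact Hw.
by have := H (Ordinal Hlt); rewrite /nrm /= -/(nrmn _) Heq eqxx.
Qed.

Lemma iotaVK (v : vert) : iotaV (iotaV v) = v.
Proof.
apply: val_inj; rewrite !iotaV_val.
move: ivok => /allP /(_ (val v)); rewrite mem_iota /= ltn_ord => /(_ isT) /andP [_ /eqP] //.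
Qed.

Lemma mem_iotaS (E : {set vert}) a : (a \in iotaS E) = (iotaV a \in E).
Proof.
apply/imsetP/idP => [[x Hx ->]|H]; first by rewrite iotaVK.
by exists (iotaV a); rewrite ?iotaVK.
Qed.

Definition tset (i : nat) : {set vert} := [set x : vert | (x : nat) \in nth [::] tets i].

Lemma delta_tset i (a b : vert) : delta_edge (tset i) a b = deltan (nth [::] tets i) a b.
Proof.
by rewrite /delta_edge /deltan !mem_iotaS !in_set !iotaV_val.
Qed.

Lemma sum_bridge i (zo : face) (a b : vert) :
  \sum_(z : face | (z != zo) && (z != iotaF zo)) nsoln i zo z * bdry z a b =
  \sum_(0 <= z < 12 | (z != val zo) && (z != nth 0%N iftab zo)) nsoln i zo z * bdryn z a b.
Proof.
rewrite big_mkord; apply: eq_big => z //.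
by rewrite -iotaF_val.
Qed.

Lemma tset_ok i (zo : face) : (i < 10)%N -> forall a b : vert, adj a b ->
  (delta_edge (tset i) a b ==
     \sum_(z : face | (z != zo) && (z != iotaF zo)) nsoln i zo z * bdry z a b %[mod 3])%Z.
Proof.
move=> Hi a b Hab.
rewrite delta_tset sum_bridge.
have mi : forall n m : nat, (m < n)%N -> m \in iota 0 n by move=> n m H; rewrite mem_iota.
move: allok => /allP /(_ i (mi _ _ Hi)) /allP /(_ (val zo) (mi _ _ (ltn_ord zo))).
move=> /allP /(_ (val a) (mi _ _ (ltn_ord a))) /allP /(_ (val b) (mi _ _ (ltn_ord b))).
by move=> /implyP; apply.
Qed.

Lemma hamming3 (s t u : bool * bool * bool) : hamming s t = 3%N ->
  [|| u == s, u == t, hamming s u == 1%N | hamming t u == 1%N].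
Proof.
by case: s t u => [[[] []] []] [[[] []] []] [[[] []] []].
Qed.

Lemma hamming0 (s t : bool * bool * bool) : hamming s t = 0%N -> s = t.
Proof. by case: s t => [[[] []] []] [[[] []] []]. Qed.

Lemma hamming_le3 (s t : bool * bool * bool) : (hamming s t <= 3)%N.
Proof. by case: s t => [[[] []] []] [[[] []] []]. Qed.

Lemma zsc4_inj x y : zsc 4 x = zsc 4 y -> x = y.
Proof. by case: x y => [x1 x2] [y1 y2] [H1 H2]; congr pair; lia. Qed.

Lemma E_tet (e E : {set vert}) :
  inscribed_cube e ->
  E \subset e -> #|E| = 4%N ->
  (forall x y, x \in E -> y \in E -> ~ cube_adj e x y) ->
  exists2 i, (i < 10)%N & E = tset i.
Proof.
case=> g [c2 [w1 [w2 [w3 [Hcp He]]]]] HEe HE4 Hna.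
set S := [set t | g t \in E].
have Hind : forall s t, s \in S -> t \in S -> hamming s t <> 1%N.
  move=> s t; rewrite !inE => Hs Ht H1; apply: (Hna _ _ Hs Ht).
  by exists g, c2, w1, w2, w3; split => //; exists s, t.
have Hsub : E \subset g @: S.
  apply/subsetP => x Hx; move: (subsetP HEe x Hx); rewrite He => /imsetP [t _ Ht].
  by apply/imsetP; exists t => //; rewrite inE -Ht.
have HS4 : (4 <= #|S|)%N.
  by rewrite -HE4; apply: leq_trans (subset_leq_card Hsub) (leq_imset_card _ _).
have H2 : forall s t, s \in S -> t \in S -> s != t -> hamming s t = 2%N.
  move=> s t Hs Ht Hst.
  have := hamming_le3 s t.
  case Hh: (hamming s t) => [|[|[|[|n]]]] // _.
  - by move: Hst; rewrite (hamming0 _ _ Hh) eqxx.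
  - by case: (Hind _ _ Hs Ht Hh).
  - have : S \subset [set s; t].
      apply/subsetP => u Hu; rewrite !inE.
      case/or4P: (hamming3 _ _ u Hh) => [->|->|/eqP H|/eqP H]; rewrite ?orbT //.
        by case: (Hind _ _ Hs Hu H).
      by case: (Hind _ _ Ht Hu H).
    move=> /subset_leq_card; rewrite cards2 => H.
    by have := leq_trans HS4 H; case: (_ != _).
have K : forall x y, x \in E -> y \in E -> x != y ->
    zsc 4 (sqdn x y) = zsc 8 (vdot w1 w1).
  move=> x y Hx Hy Hxy.
  move: (subsetP Hsub x Hx) (subsetP Hsub y Hy) => /imsetP [s Hs Exs] /imsetP [t Ht Eyt].
  subst x y.
  apply: (key _ _ _ _ _ _ _ Hcp); apply: H2 => //.
  by apply: contraNneq Hxy => ->.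
have Hcard : size (enum E) = 4%N by rewrite -cardE.
have Hu := enum_uniq (mem E).
have memE : forall x, (x \in E) = (x \in enum E) by move=> x; rewrite mem_enum.
move: Hcard Hu memE.
case: (enum E) => [|a [|b [|c [|d [|? ?]]]]] // _ Hu memE.
have nv : forall x y : vert, x != y -> (val x != val y)%N by move=> x y; rewrite val_eqE.
move: Hu; rewrite /= !inE !negb_or => /andP [/and3P [Hab Hac Had] /andP [/andP [Hbc Hbd] /andP [Hcd _]]].
have inE' : forall x, x \in [:: a; b; c; d] -> x \in E by move=> x; rewrite memE.
have Hsq : forall x y, x \in [:: a; b; c; d] -> y \in [:: a; b; c; d] -> x != y ->
    sqdn x y = sqdn a b.
  move=> x y Hx Hy Hxy; apply: zsc4_inj.
  by rewrite (K _ _ (inE' _ Hx) (inE' _ Hy) Hxy) K // inE' // !inE eqxx ?orbT.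
have mi : forall n m : nat, (m < n)%N -> m \in iota 0 n by move=> n m H; rewrite mem_iota.
have Q : forall x y, x \in [:: a; b; c; d] -> y \in [:: a; b; c; d] -> x != y ->
    (val x != val y) && (sqdn x y == sqdn a b).
  move=> x y Hx Hy Hxy; apply/andP; split; [exact: nv | apply/eqP; exact: Hsq].
have ia : a \in [:: a; b; c; d] by rewrite !inE eqxx ?orbT.
have ib : b \in [:: a; b; c; d] by rewrite !inE eqxx ?orbT.
have ic : c \in [:: a; b; c; d] by rewrite !inE eqxx ?orbT.
have id : d \in [:: a; b; c; d] by rewrite !inE eqxx ?orbT.
have Hca : c != a by rewrite eq_sym.
have Hcb : c != b by rewrite eq_sym.
have Hda : d != a by rewrite eq_sym.
have Hdb : d != b by rewrite eq_sym.
have Hdc : d != c by rewrite eq_sym.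
move: (Q _ _ ic ia Hca) (Q _ _ ic ib Hcb) (Q _ _ ia ic Hac) (Q _ _ ib ic Hbc) => /andP [C1 _] /andP [C2 _] /andP [_ C3] /andP [_ C4].
move: (Q _ _ id ia Hda) (Q _ _ id ib Hdb) (Q _ _ id ic Hdc) (Q _ _ ia id Had) (Q _ _ ib id Hbd) (Q _ _ ic id Hcd) => /andP [D1 _] /andP [D2 _] /andP [D3 _] /andP [_ D4] /andP [_ D5] /andP [_ D6].
move: tetn_ok => /allP /(_ _ (mi _ _ (ltn_ord a))) /allP /(_ _ (mi _ _ (ltn_ord b))).
move=> /implyP /(_ (nv _ _ Hab)) /allP /(_ _ (mi _ _ (ltn_ord c))) /implyP.
rewrite C1 C2 C3 C4 => /(_ isT) /allP /(_ _ (mi _ _ (ltn_ord d))) /implyP.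
rewrite D1 D2 D3 D4 D5 D6 => /(_ isT) /hasP [i].
rewrite mem_iota add0n => /andP [_ Hi] Hp.
exists i => //.
apply/setP => x; rewrite in_set (perm_mem Hp) memE -(mem_map val_inj).
by [].
Qed.

Theorem lemma3p7 (e E : {set vert}) :
  inscribed_cube e ->
  E \subset e -> #|E| = 4%N ->
  (forall x y, x \in E -> y \in E -> ~ cube_adj e x y) ->
  forall zo : face,
  exists n : face -> int,
    forall a b : vert, adj a b ->
      (delta_edge E a b ==
         \sum_(z : face | (z != zo) && (z != iotaF zo)) n z * bdry z a b %[mod 3])%Z.
Proof.
move=> He HEe HE4 Hna zo.
have [i Hi ->] := E_tet _ _ He HEe HE4 Hna.
exists (nsoln i zo); exact: (tset_ok _ _ Hi).
Qed.
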